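(* Let $0<q<1/2$, $p=1-q$, and for integers $z\ge1$ let $$P(z)=1-\sum_{k=0}^{z-1}\left(p^zq^k-q^zp^k\right)\binom{k+z-1}{k},\qquad P_{SN}(z)=1-\sum_{k=0}^{z-1}e^{-zq/p}\frac{(zq/p)^k}{k!}\left(1-\left(\frac qp\right)^{z-k}\right).$$ Then as $z\to+\infty$, $P_{SN}(z)\prec P(z)$, i.e. $P_{SN}(z)/P(z)\to0$.
   Context: $P(z)$ is the exact probability of success of a double-spend attack after $z$ confirmations, $P_{SN}(z)$ is Nakamoto's approximation. *)

(* Defs.v *)
From Stdlib Require Import Reals Factorial.
From Coquelicot Require Import Coquelicot.
Open Scope R_scope.

(* Exact success probability of a double-spend attack after z confirmations:
   P(z) = 1 - sum_{k=0}^{z-1} (p^z q^k - q^z p^k) * C(k+z-1, k). *)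
Definition P_exact (q : R) (z : nat) : R :=
  let p := 1 - q in
  1 - sum_f_R0 (fun k => (p ^ z * q ^ k - q ^ z * p ^ k) * Binomial.C (k + z - 1) k)
                (z - 1).

Definition P_SN (q : R) (z : nat) : R :=
  let p := 1 - q in
  let lam := INR z * q / p in
  1 - sum_f_R0 (fun k => exp (- lam) * lam ^ k / INR (Factorial.fact k) * (1 - (q / p) ^ (z - k)))
                (z - 1).

(* Main.v *)
Require Import Defs.
From Stdlib Require Import Reals Lra Lia Factorial.
From Coquelicot Require Import Coquelicot.
Open Scope R_scope.

Lemma powle1 (x : R) (n : nat) : 0 <= x <= 1 -> x ^ n <= 1.
Proof. intros H; induction n; simpl; [lra|]. 
  assert (0 <= x ^ n) by (apply pow_le; lra). nra. Qed.

Lemma C_ge0 n k : 0 <= Binomial.C n k.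
Proof. unfold Binomial.C. apply Rmult_le_pos; [apply pos_INR|].
  apply Rlt_le, Rinv_0_lt_compat, Rmult_lt_0_compat; apply INR_fact_lt_0. Qed.

Lemma Cdiag_eq n : Binomial.C (2 * S n) (S n) =
  Binomial.C (2 * n) n * (2 * (2 * INR n + 1) / (INR n + 1)).
Proof.
  unfold Binomial.C.
  replace (2 * S n - S n)%nat with (S n) by lia.
  replace (2 * n - n)%nat with n by lia.
  replace (2 * S n)%nat with (S (S (2 * n))) by lia.
  rewrite !fact_simpl, !mult_INR, !S_INR, mult_INR. simpl (INR 2).
  assert (H1 := INR_fact_neq_0 n). assert (H2 := INR_fact_neq_0 (2*n)).
  assert (0 <= INR n) by apply pos_INR.
  field. repeat split; try lra. 
Qed.

Lemma Cdiag_ge n : 4 ^ n / INR (2 * n + 1) <= Binomial.C (2 * n) n.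
Proof.
  induction n.
  - simpl. unfold Binomial.C. simpl. lra.
  - rewrite Cdiag_eq.
    assert (0 <= INR n) by apply pos_INR.
    assert (0 < 4 ^ n) by (apply pow_lt; lra).
    apply Rle_trans with (4 ^ n / INR (2 * n + 1) * (2 * (2 * INR n + 1) / (INR n + 1))).
    + replace (INR (2 * n + 1)) with (2 * INR n + 1) by (rewrite plus_INR, mult_INR; simpl INR; ring).
      replace (INR (2 * S n + 1)) with (2 * INR n + 3) by (rewrite plus_INR, mult_INR, (S_INR n); simpl (INR 2); simpl (INR 1); ring).
      replace (4 ^ n / (2 * INR n + 1) * (2 * (2 * INR n + 1) / (INR n + 1)))
        with (4 ^ S n / (2 * INR n + 2)) by (simpl; field; lra).
      unfold Rdiv. apply Rmult_le_compat_l; [simpl; lra|].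
      apply Rinv_le_contravar; lra.
    + apply Rmult_le_compat_r; [|exact IHn].
      apply Rmult_le_pos; [lra|]. apply Rlt_le, Rinv_0_lt_compat; lra.
Qed.

Definition T (q : R) (m n : nat) := sum_f_R0 (fun k => Binomial.C (k + m) k * q ^ k) n.

Lemma T_rec q m n : T q (S m) (S n) = T q m (S n) + q * T q (S m) n.
Proof.
  unfold T. rewrite (decomp_sum _ (S n)) by lia. rewrite (decomp_sum _ (S n)) by lia.
  simpl Init.Nat.pred. rewrite !C_n_0. simpl (q ^ 0).
  rewrite scal_sum. rewrite Rplus_assoc, <- plus_sum. f_equal.
  apply sum_eq. intros i _.
  replace (S i + S m)%nat with (S (i + S m)) by lia.
  replace (S i + m)%nat with (i + S m)%nat by lia.
  rewrite <- pascal by lia. simpl. ring.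
Qed.

Lemma T_mono q m n : 0 <= q -> T q m n <= T q m (S n).
Proof. intros. unfold T. rewrite tech5. assert (0 <= Binomial.C (S n + m) (S n) * q ^ S n).
  apply Rmult_le_pos; [apply C_ge0| apply pow_le; lra]. lra. Qed.

Lemma T_bound q m : 0 < q < 1 -> forall n, (1 - q) ^ (S m) * T q m n <= 1.
Proof.
  intros Hq. induction m; intros n.
  - unfold T. rewrite (sum_eq _ (fun k => q ^ k)).
    2:{ intros i _. rewrite Nat.add_0_r, C_n_n. ring. }
    assert (H := GP_finite q n).
    assert (0 <= q ^ (n+1)) by (apply pow_le; lra).
    simpl. rewrite Rmult_1_r. nra.
  - assert (H := T_rec q m n). assert (H2 := T_mono q (S m) n).
    assert (H3 := IHm (S n)).
    assert (0 < (1 - q) ^ S m) by (apply pow_lt; lra).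
    replace ((1 - q) ^ S (S m) * T q (S m) n) with ((1 - q) ^ S m * ((1 - q) * T q (S m) n)) by (simpl; ring).
    apply Rle_trans with ((1 - q) ^ S m * T q m (S n)); [|exact H3].
    apply Rmult_le_compat_l; [lra|]. nra.
Qed.

Definition Sx (x : R) (n : nat) := sum_f_R0 (fun k => x ^ k / INR (fact k)) n.

Lemma Sx_lim x : is_lim_seq (Sx x) (exp x).
Proof.
  apply is_lim_seq_Reals. unfold exp. destruct (exist_exp x) as [l Hl]. simpl.
  intros eps He. destruct (Hl eps He) as [N HN]. exists N. intros n Hn.
  unfold Sx. rewrite (sum_eq _ (fun i => / INR (fact i) * x ^ i)). apply HN; auto.
  intros; unfold Rdiv; ring.
Qed.

Lemma tail_cmp (rho b : R) (n : nat) : 0 < rho <= 1 -> 0 <= b ->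
  exp (rho * b) - Sx (rho * b) n <= rho ^ S n * (exp b - Sx b n).
Proof.
  intros Hr Hb.
  assert (L1 : is_lim_seq (fun N => Sx (rho * b) N - Sx (rho * b) n) (exp (rho * b) - Sx (rho * b) n)).
  { apply is_lim_seq_minus'. apply Sx_lim. apply is_lim_seq_const. }
  assert (L2 : is_lim_seq (fun N => rho ^ S n * (Sx b N - Sx b n)) (rho ^ S n * (exp b - Sx b n))).
  { apply (is_lim_seq_scal_l _ (rho ^ S n) (exp b - Sx b n)). apply is_lim_seq_minus'. apply Sx_lim. apply is_lim_seq_const. }
  refine (is_lim_seq_le_loc _ _ _ _ _ L1 L2).
  exists n. intros N HN. replace N with (n + (N - n))%nat by lia.
  generalize (N - n)%nat. intros k. induction k.
  - rewrite Nat.add_0_r. lra.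
  - replace (n + S k)%nat with (S (n + k)) by lia. unfold Sx in *. rewrite !tech5.
    set (m := S (n + k)).
    assert (rho ^ m <= rho ^ S n).
    { replace m with (S n + k)%nat by (unfold m; lia). rewrite pow_add.
      assert (0 < rho ^ S n) by (apply pow_lt; lra).
      assert (rho ^ k <= 1). { clear -Hr. induction k; simpl; [lra|].
        assert (0 <= rho ^ k) by (apply pow_le; lra). nra. }
      nra. }
    assert (0 < / INR (fact m)) by (apply Rinv_0_lt_compat, INR_fact_lt_0).
    assert (0 <= b ^ m) by (apply pow_le; lra).
    rewrite Rpow_mult_distr. unfold Rdiv.
    assert (rho ^ m * b ^ m * / INR (fact m) <= rho ^ S n * (b ^ m * / INR (fact m))).
    { rewrite <- Rmult_assoc. apply Rmult_le_compat_r; [lra|].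
      apply Rmult_le_compat_r; lra. }
    nra.
Qed.

Lemma lim_nc (c : R) : 0 < c < 1 -> is_lim_seq (fun n => INR (S n) * c ^ n) 0.
Proof.
  intros Hc.
  assert (Hinv : is_lim_seq (fun n => / INR (S n)) 0).
  { assert (H := is_lim_seq_INR). apply is_lim_seq_incr_1 in H.
    apply is_lim_seq_inv in H; [|discriminate]. exact H. }
  apply is_lim_seq_ext with (fun n => Rabs (INR (S n) * c ^ n)).
  { intros n. apply Rabs_pos_eq. apply Rmult_le_pos; [apply pos_INR| apply pow_le; lra]. }
  apply ex_series_lim_0. apply (ex_series_DAlembert _ c); [lra| |].
  - intros n. apply Rgt_not_eq. apply Rmult_lt_0_compat; [apply lt_0_INR; lia| apply pow_lt; lra].
  - apply is_lim_seq_ext with (fun n => c + c * / INR (S n)).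
    + intros n. assert (0 < INR (S n)) by (apply lt_0_INR; lia).
      assert (0 < c ^ n) by (apply pow_lt; lra).
      rewrite Rabs_pos_eq.
      * rewrite (S_INR (S n)). simpl pow. field. lra.
      * apply Rmult_le_pos; [apply Rmult_le_pos; [apply pos_INR| apply pow_le; lra]|].
        apply Rlt_le, Rinv_0_lt_compat, Rmult_lt_0_compat; [lra| apply pow_lt; lra].
    + replace c with (c + c * 0) at 1 by ring.
      apply is_lim_seq_plus'. apply is_lim_seq_const. apply (is_lim_seq_scal_l _ c 0); exact Hinv.
Qed.

Lemma exp_nat (x : R) (n : nat) : exp (INR n * x) = exp x ^ n.
Proof. induction n. simpl. rewrite Rmult_0_l, exp_0. reflexivity.
  rewrite S_INR, Rmult_plus_distr_r, Rmult_1_l, exp_plus, IHn. simpl. ring. Qed.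

Lemma c_lt1 (q : R) : 0 < q < 1/2 -> exp (1 - q / (1 - q)) < 4 * (1 - q) ^ 2.
Proof.
  intros Hq. set (w := (1 - 2 * q) / (2 * (1 - q))).
  assert (Hw : 0 < w) by (unfold w; apply Rdiv_lt_0_compat; lra).
  replace (1 - q / (1 - q)) with (w + w) by (unfold w; field; lra).
  rewrite exp_plus.
  assert (H1 := exp_ineq1 (- w) ltac:(lra)).
  assert (Hw2 : 1 - w = / (2 * (1 - q))) by (unfold w; field; lra).
  assert (exp w < 2 * (1 - q)).
  { replace (exp w) with (/ exp (- w)) by (rewrite exp_Ropp, Rinv_inv; reflexivity).
    replace (2 * (1 - q)) with (/ (1 - w)) by (rewrite Hw2, Rinv_inv; reflexivity).
    apply Rinv_lt_contravar. assert (0 < exp (-w)) by apply exp_pos. rewrite Hw2.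
    apply Rmult_lt_0_compat; auto. apply Rinv_0_lt_compat; lra. lra. }
  assert (0 < exp w) by apply exp_pos. simpl. nra.
Qed.

Lemma P_exact_lb (q : R) (n : nat) : 0 < q < 1 ->
  q ^ S n * (1 - q) ^ n * (4 ^ n / INR (2 * n + 1)) <= P_exact q (S n).
Proof.
  intros Hq. unfold P_exact.
  replace (S n - 1)%nat with n by lia.
  rewrite (sum_eq _ (fun k => Binomial.C (k + n) k * q ^ k * (1 - q) ^ S n
                             - (1 - q) ^ k * Binomial.C (k + n) k * q ^ S n)).
  2:{ intros i _. replace (i + S n - 1)%nat with (i + n)%nat by lia. ring. }
  rewrite minus_sum, <- !scal_sum.
  assert (HT := T_bound q n Hq n). unfold T in HT.
  set (U := sum_f_R0 (fun i => (1 - q) ^ i * Binomial.C (i + n) i) n).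
  assert (HU : (1 - q) ^ n * Binomial.C (2 * n) n <= U).
  { unfold U. destruct n as [|m].
    - simpl. lra.
    - rewrite tech5. replace (S m + S m)%nat with (2 * S m)%nat by lia.
      assert (0 <= sum_f_R0 (fun i => (1 - q) ^ i * Binomial.C (i + S m) i) m).
      { apply cond_pos_sum. intros k. apply Rmult_le_pos; [apply pow_le; lra| apply C_ge0]. }
      lra. }
  assert (HC := Cdiag_ge n).
  assert (0 < q ^ S n) by (apply pow_lt; lra).
  assert (0 < (1 - q) ^ n) by (apply pow_lt; lra).
  assert (q ^ S n * (1 - q) ^ n * (4 ^ n / INR (2 * n + 1)) <= q ^ S n * U).
  { rewrite Rmult_assoc. apply Rmult_le_compat_l; [lra|].
    apply Rle_trans with ((1 - q) ^ n * Binomial.C (2 * n) n); [|exact HU].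
    apply Rmult_le_compat_l; lra. }
  lra.
Qed.

Lemma P_SN_bounds (q : R) (n : nat) : 0 < q < 1 / 2 ->
  0 <= P_SN q (S n) <= (q / (1 - q)) ^ S n * exp (1 - q / (1 - q)) ^ S n.
Proof.
  intros Hq. unfold P_SN.
  set (rho := q / (1 - q)). set (z := INR (S n)).
  assert (Hrho : 0 < rho <= 1) by (unfold rho; split; [apply Rdiv_lt_0_compat|apply Rcomplements.Rle_div_l]; lra).
  assert (Hz : 0 <= z) by apply pos_INR.
  replace (z * q / (1 - q)) with (rho * z) by (unfold rho; field; lra).
  set (lam := rho * z).
  replace (S n - 1)%nat with n by lia.
  rewrite (sum_eq _ (fun k => (lam ^ k / INR (fact k)) * exp (- lam) - (z ^ k / INR (fact k)) * (exp (- lam) * rho ^ S n))).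
  2:{ intros i Hi. unfold lam. rewrite Rpow_mult_distr.
      replace (rho ^ S n) with (rho ^ i * rho ^ (S n - i)) by (rewrite <- pow_add; f_equal; lia).
      field. apply INR_fact_neq_0. }
  rewrite minus_sum, <- !scal_sum.
  fold (Sx lam n). fold (Sx z n).
  assert (Ht := tail_cmp rho z n Hrho Hz). fold lam in Ht.
  assert (Hg := exp_ge_taylor lam n ltac:(unfold lam; apply Rmult_le_pos; lra)). fold (Sx lam n) in Hg.
  assert (Hs : 0 <= Sx z n).
  { unfold Sx. apply cond_pos_sum. intros k. apply Rmult_le_pos; [apply pow_le; lra|].
    apply Rlt_le, Rinv_0_lt_compat, INR_fact_lt_0. }
  assert (He : exp (- lam) * exp lam = 1) by (rewrite <- exp_plus, Rplus_opp_l, exp_0; reflexivity).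
  assert (0 < exp (- lam)) by apply exp_pos.
  assert (0 < rho ^ S n) by (apply pow_lt; lra).
  assert (Hfin : exp (- lam) * exp z = exp (1 - rho) ^ S n).
  { rewrite <- exp_plus, <- exp_nat. f_equal. unfold lam, z. ring. }
  split.
  - assert (0 <= exp (- lam) * (exp lam - Sx lam n)) by (apply Rmult_le_pos; lra).
    assert (0 <= exp (- lam) * rho ^ S n * Sx z n) by (apply Rmult_le_pos; [apply Rmult_le_pos|]; lra).
    nra.
  - rewrite <- Hfin.
    assert (exp (- lam) * (exp lam - Sx lam n) <= exp (- lam) * (rho ^ S n * (exp z - Sx z n)))
      by (apply Rmult_le_compat_l; lra).
    nra.
Qed.

Theorem mainTheorem10 (q : R) (hq0 : 0 < q) (hq1 : q < 1 / 2) :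
  is_lim_seq (fun z : nat => P_SN q z / P_exact q z) 0.
Proof.
  apply is_lim_seq_incr_1.
  set (E := exp (1 - q / (1 - q))).
  set (c := E / (4 * (1 - q) ^ 2)).
  assert (HE : 0 < E) by apply exp_pos.
  assert (Hc : 0 < c < 1).
  { assert (H := c_lt1 q ltac:(lra)). fold E in H. unfold c. split.
    apply Rdiv_lt_0_compat; [lra|]. apply Rmult_lt_0_compat; [lra| apply pow_lt; lra].
    apply Rcomplements.Rlt_div_l; [apply Rmult_lt_0_compat; [lra| apply pow_lt; lra]|lra]. }
  apply is_lim_seq_le_le with (fun _ => 0) (fun n => E / (1 - q) * (2 * (INR (S n) * c ^ n))).
  2: apply is_lim_seq_const.
  2:{ replace (Finite 0) with (Rbar_mult (E / (1 - q)) (Rbar_mult 2 0)) by (simpl; f_equal; ring).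
      apply is_lim_seq_scal_l, is_lim_seq_scal_l, lim_nc, Hc. }
  intros n.
  assert (HL := P_exact_lb q n ltac:(lra)).
  assert (HS := P_SN_bounds q n ltac:(lra)). fold E in HS.
  set (L := q ^ S n * (1 - q) ^ n * (4 ^ n / INR (2 * n + 1))) in *.
  assert (HI : 0 < INR (2 * n + 1)) by (apply lt_0_INR; lia).
  assert (HLp : 0 < L).
  { unfold L. apply Rmult_lt_0_compat; [apply Rmult_lt_0_compat; apply pow_lt; lra|].
    apply Rdiv_lt_0_compat; [apply pow_lt; lra| exact HI]. }
  set (Pe := P_exact q (S n)) in *. set (Ps := P_SN q (S n)) in *.
  split.
  - apply Rmult_le_pos; [lra|]. apply Rlt_le, Rinv_0_lt_compat; lra.
  - apply Rle_trans with ((q / (1 - q)) ^ S n * E ^ S n / L).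
    + unfold Rdiv. apply Rmult_le_compat; try lra.
      apply Rlt_le, Rinv_0_lt_compat; lra.
      apply Rinv_le_contravar; lra.
    + assert (Hcn : 0 < c ^ n) by (apply pow_lt; lra).
      apply Rle_trans with (E / (1 - q) * ((2 * INR n + 1) * c ^ n)).
      2:{ apply Rmult_le_compat_l. apply Rlt_le, Rdiv_lt_0_compat; lra.
          rewrite S_INR. assert (0 <= INR n) by apply pos_INR. nra. }
      apply Req_le. unfold L, c.
      replace (INR (2 * n + 1)) with (2 * INR n + 1) by (rewrite plus_INR, mult_INR; simpl INR; ring).
      unfold Rdiv. rewrite !Rpow_mult_distr, !pow_inv, !Rpow_mult_distr. simpl pow.
      assert (0 < q ^ n) by (apply pow_lt; lra).
      assert (0 < (1 - q) ^ n) by (apply pow_lt; lra).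
      assert (0 < 4 ^ n) by (apply pow_lt; lra).
      assert (0 <= INR n) by apply pos_INR.
      rewrite Rmult_1_r, Rpow_mult_distr.
      field. repeat split; lra.
Qed.
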